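(* Consider $n$ flows sharing a server that performs interleaved weighted round robin (IWRR) with positive integer weights $w_1,\dots,w_n$, and fix a flow of interest $f_i$. Then for every backlogged period $(s,t]$ of $f_i$ and every $j\neq i$, \[ \frac{D_i(s,t)}{w_i l_i^{\min}} \;\geq\; \frac{\big[D_j(s,t)-\big([w_j-w_i]^++1\big)l_j^{\max}\big]^+}{(w_j+w_i)\,l_j^{\max}}. \] That is, IWRR is a bandwidth-sharing policy for $f_i$ with weights $\phi_i''=w_i l_i^{\min}$, $\phi_j''=(w_j+w_i)l_j^{\max}$ ($j\neq i$) and penalty terms $H_{ij}''=([w_j-w_i]^++1)\,l_j^{\max}\,\mathbb{1}_{\{i\neq j\}}$.
   Context: Each flow $f_k$ sends packets with sizes in $[l_k^{\min},l_k^{\max}]$, $0<l_k^{\min}\le l_k^{\max}$, queued FIFO in a per-flow queue. IWRR: let $w_{\max}=\max_k w_k$. The server runs rounds forever; each round consists of cycles $c=1,\dots,w_{\max}$; in cycle $c$ the server visits flows $k=1,\dots,n$ in order and, if queue $k$ is nonempty and $c\le w_k$, transmits (non-preemptively) exactly one packet from the head of queue $k$. $D_k(t)$ is the cumulative data of flow $k$ that has left the server in $[0,t)$, $A_k(t)$ the cumulative arrivals, $D_k\le A_k$, $D_k(s,t):=D_k(t)-D_k(s)$. An interval $(s,t]$ is a backlogged period of $f_i$ if $D_i(\tau)<A_i(\tau)$ for all $\tau\in(s,t]$. $[x]^+:=\max\{x,0\}$. A server has a bandwidth-sharing policy if there exist weights $\phi_k>0$ and numbers $H_{ij}\ge0$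 such that for every backlogged period $(s,t]$ of $f_i$ and all $j\neq i$: $D_i(s,t)/\phi_i\ge[D_j(s,t)-H_{ij}]^+/\phi_j$. *)

(* Defs.v *)
From HB Require Import structures.
From mathcomp Require Import all_boot all_order all_algebra.
From mathcomp Require Import boolp.
Set Implicit Arguments. Unset Strict Implicit. Unset Printing Implicit Defensive.
Import Order.TTheory GRing.Theory Num.Theory.
Local Open Scope ring_scope.

Definition pos_part {R : realFieldType} (x : R) : R := Num.max x 0.

(* Sum of x m over the (finitely many) m with P m; 0 if infinitely many
   (never happens under the hypotheses of the theorem). Any bound N beyond
   which P is false gives the same value. *)
Definition cumsum {R : realFieldType} (P : nat -> bool) (x : nat -> R) : R :=
  match pselect (exists N : nat, forall m : nat, (N <= m)%N -> ~~ P m) with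
  | left h => \sum_(m < projT1 (cid h) | P m) x m
  | right _ => 0
  end.

(* Arrival time of a packet: [Some a] = arrives at time a, [None] = never
   arrives (allows flows with finitely many packets). *)
Definition arrived_lt {R : realFieldType} (a : option R) (t : R) : bool :=
  if a is Some x then x < t else false.
Definition arrived_le {R : realFieldType} (a : option R) (t : R) : bool :=
  if a is Some x then x <= t else false.

(* Server visits are numbered v = 0,1,2,...; visit v is to flow (v %% n)
   (0-indexed) in cycle ((v %/ n) %% wmax) + 1 of round v %/ (n * wmax). *)
Definition wmax (n : nat) (w : 'I_n -> nat) : nat := \max_(k : 'I_n) w k.

(* number of packets of flow k transmitted by the visits before visit v;
   by FIFO, visit v (if it transmits for flow k) sends packet number
   [sent n trans k v] of flow k (0-indexed) *)
Definition sent (n : nat) (trans : nat -> bool) (k : nat) (v : nat) : nat :=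
  count (fun u => trans u && (u %% n == k)%N) (iota 0 v).

Definition Arr {R : realFieldType} (n : nat) (arr : 'I_n -> nat -> option R)
  (len : 'I_n -> nat -> R) (k : 'I_n) (t : R) : R :=
  cumsum (fun m => arrived_lt (arr k m) t) (len k).

(* D_k(t): cumulative data of flow k that has left the server in [0,t):
   the packet sent at visit u leaves at the end [fin u] of its transmission *)
Definition Dep {R : realFieldType} (n : nat) (len : 'I_n -> nat -> R)
  (trans : nat -> bool) (fin : nat -> R) (k : 'I_n) (t : R) : R :=
  cumsum (fun u => [&& trans u, (u %% n == k)%N & fin u < t])
         (fun u => len k (sent n trans k u)).

Definition arrivals_ok {R : realFieldType} (n : nat) (lmin lmax : 'I_n -> R)
  (arr : 'I_n -> nat -> option R) (len : 'I_n -> nat -> R) : Prop :=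
  [/\ forall k, 0 < lmin k /\ lmin k <= lmax k,
      forall k m, lmin k <= len k m <= lmax k,
      forall k m a, arr k m = Some a -> 0 <= a,
      forall k m a', arr k m.+1 = Some a' ->
        exists2 a, arr k m = Some a & a <= a'
    & forall k (t : R), exists N : nat, forall m, (N <= m)%N ->
        ~~ arrived_lt (arr k m) t].

(* An IWRR execution: visit v starts at time tau v; if it transmits
   (trans v), the (non-preemptive) transmission ends at fin v and the next
   visit is not before fin v. Visit v to flow k in cycle c transmits exactly one packet
   (the head of queue k) iff c <= w k and queue k is nonempty at time tau v. *)
Definition iwrr_exec {R : realFieldType} (n : nat) (w : 'I_n -> nat)
  (arr : 'I_n -> nat -> option R)
  (tau fin : nat -> R) (trans : nat -> bool) : Prop :=
  [/\ 0 <= tau 0%N,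
      forall v, if trans v then tau v < fin v /\ fin v <= tau v.+1
                else tau v <= tau v.+1,
      forall t : R, exists v, t <= tau v
    & forall v (k : 'I_n), (v %% n)%N = k ->
        trans v = ((v %/ n) %% wmax w < w k)%N
                  && arrived_le (arr k (sent n trans k v)) (tau v)].

Definition backlogged {R : realFieldType} (A D : R -> R) (s t : R) : Prop :=
  forall tau, s < tau <= t -> D tau < A tau.

(* Main.v *)
Require Import Defs.
From HB Require Import structures.
From mathcomp Require Import all_boot all_order all_algebra.
From mathcomp Require Import boolp zify ring lra.
Import Order.TTheory GRing.Theory Num.Theory.

Definition pW (W lo hi : nat) := fun g : nat => (lo <= g %% W) && (g %% W < hi).

Lemma cnt_prefix lo hi m : count (fun g => (lo <= g) && (g < hi)) (iota 0 m) = minn m hi - lo.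
Proof.
elim: m => [|m IH]; first by rewrite /= min0n.
rewrite -addn1 iotaD count_cat IH /= add0n.
case: (leqP lo m) => h1; case: (ltnP m hi) => h2 /=; lia.
Qed.

Lemma cnt_period W lo hi x : 0 < W -> hi <= W ->
  count (pW W lo hi) (iota x W) = hi - lo.
Proof.
move=> W0 hW; elim: x => [|x IH].
  rewrite (@eq_in_count _ _ (fun g => (lo <= g) && (g < hi))); last first.
    move=> g; rewrite mem_iota add0n => /andP[_ hg]; by rewrite /pW modn_small.
  rewrite cnt_prefix; congr (_ - _); apply/minn_idPr; done.
case: W W0 hW IH => [//|W'] _ hW.
have e : iota x.+1 W'.+1 = iota x.+1 W' ++ [:: x.+1 + W'] by rewrite -[W'.+1]addn1 iotaD.
rewrite [iota x _]/= e count_cat /= => IH.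
rewrite -IH addn0 addnC; congr (_ + _).
rewrite /pW.
have -> : (x.+1 + W') %% W'.+1 = x %% W'.+1.
  by rewrite addSnnS modnDr.
done.
Qed.

Lemma cnt_periods W lo hi x q : 0 < W -> hi <= W ->
  count (pW W lo hi) (iota x (q * W)) = q * (hi - lo).
Proof.
move=> W0 hW; elim: q x => [|q IH] x; first by rewrite !mul0n.
by rewrite mulSn iotaD count_cat cnt_period // IH mulSn.
Qed.

Lemma cnt_win W lo hi x L : 0 < W -> hi <= W ->
  (L %/ W) * (hi - lo) <= count (pW W lo hi) (iota x L) <= (L %/ W).+1 * (hi - lo).
Proof.
move=> W0 hW.
rewrite [in iota x L](divn_eq L W) iotaD count_cat cnt_periods //.
set y := x + _. set r := L %% W.
have hr : r <= W by rewrite ltnW // ltn_mod.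
have : count (pW W lo hi) (iota y r) <= hi - lo.
  have := cnt_period W lo hi y W0 hW.
  have e : iota y W = iota y r ++ iota (y+r) (W-r) by rewrite -iotaD subnKC.
  rewrite e count_cat => <-. lia.
move=> h. apply/andP; split; lia.
Qed.

Lemma window W wi wj x L : 0 < W -> wi <= W -> wj <= W ->
  wi * (count (pW W 0 wj) (iota x L) - (wj - wi)) <= (wi + wj) * count (pW W 0 wi) (iota x L).
Proof.
move=> W0 hi hj.
have h1 : count (pW W 0 wj) (iota x L) <= count (pW W 0 wi) (iota x L) + count (pW W wi wj) (iota x L).
  rewrite -count_predUI; apply: leq_trans (_ : _ <= count (predU (pW W 0 wi) (pW W wi wj)) (iota x L)) _; last by lia.
  apply: sub_count.
  move=> g; rewrite /pW /= => h; case: (ltnP (g %% W) wi) => //= h5; rewrite h5 h; lia.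
have /andP[h2 _] := cnt_win W 0 wi x L W0 hi.
have /andP[_ h3] := cnt_win W wi wj x L W0 hj.
rewrite subn0 in h2.
set q := L %/ W in h2 h3.
set I := count (pW W 0 wi) (iota x L) in h1 h2 *.
set J := count (pW W 0 wj) (iota x L) in h1 *.
set D := count (pW W wi wj) (iota x L) in h1 h3.
have h4 : wi * (q * (wj - wi)) <= wj * I.
  have h5 : wj - wi <= wj by rewrite leq_subr.
  have := leq_mul h2 h5. nia.
nia.
Qed.

Lemma pos_bounds (n i j qa qb g : nat) : i < n -> j < n -> i != j -> qa <= qb ->
  (if i < j then qa.+1 else qa) <= g < (if i < j then qa.+1 else qa) + (qb - qa) ->
  qa * n + j < g * n + i < qb * n + j.
Proof.
move=> hi hj ij qab; case: ltnP => hij /andP[g1 g2].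
  have h1 : qa.+1 * n <= g * n by rewrite leq_mul2r g1 orbT.
  have h2 : g * n <= qb * n by rewrite leq_mul2r; apply/orP; right; lia.
  apply/andP; split; lia.
have hij' : j < i by rewrite ltn_neqAle eq_sym ij hij.
have h1 : qa * n <= g * n by rewrite leq_mul2r g1 orbT.
have h2 : g.+1 * n <= qb * n by rewrite leq_mul2r; apply/orP; right; lia.
apply/andP; split; lia.
Qed.

Lemma sub_aux (K J d : nat) : K <= J.+1 -> K - d.+1 <= J - d.
Proof. lia. Qed.

Lemma mid_aux (qa qb y : nat) : qa <= qb -> qa <= y -> y <= qb -> qa <= y < qa + (qb - qa).+1.
Proof. lia. Qed.

Local Open Scope ring_scope.

Lemma cumsumE (R : realFieldType) (P : nat -> bool) (x : nat -> R) N :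
  (forall m, (N <= m)%N -> ~~ P m) -> cumsum P x = \sum_(m < N | P m) x m.
Proof.
move=> hN; rewrite /cumsum; case: pselect => [h|h]; last first.
  by exfalso; apply: h; exists N.
case: (cid h) => /= N' hN'.
have wid : forall a b, (a <= b)%N -> (forall m, (a <= m)%N -> ~~ P m) ->
    \sum_(m < a | P m) x m = \sum_(m < b | P m) x m.
  move=> a b ab ha; rewrite (@big_ord_widen_cond _ _ _ a b P x ab); apply: eq_bigl => m.
  by case: (ltnP m a) => hm; [rewrite andbT | rewrite andbF (negbTE (ha _ hm))].
rewrite (wid _ (maxn N N') (leq_maxr _ _) hN') (wid _ (maxn N N') (leq_maxl _ _) hN) //.
Qed.

Lemma sum_le_count (R : realFieldType) (r : seq nat) (P : pred nat) (F : nat -> R) c :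
  (forall u, P u -> F u <= c) -> \sum_(u <- r | P u) F u <= (count P r)%:R * c.
Proof.
move=> hF; elim: r => [|u r IH]; first by rewrite big_nil mul0r.
rewrite big_cons /=; case: (boolP (P u)) => hu; last by rewrite add0n.
by rewrite add1n -natr1 mulrDl mul1r addrC lerD // hF.
Qed.

Lemma sum_ge_count (R : realFieldType) (r : seq nat) (P : pred nat) (F : nat -> R) c :
  (forall u, P u -> c <= F u) -> (count P r)%:R * c <= \sum_(u <- r | P u) F u.
Proof.
move=> hF; elim: r => [|u r IH]; first by rewrite big_nil mul0r.
rewrite big_cons /=; case: (boolP (P u)) => hu; last by rewrite add0n.
by rewrite add1n -natr1 mulrDl mul1r addrC lerD // hF.
Qed.

Lemma sum_sent (R : realFieldType) (len : nat -> R) (trans : nat -> bool) n k v :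
  \sum_(u <- iota 0 v | trans u && (u %% n == k)%N) len (sent n trans k u)
  = \sum_(m <- iota 0 (sent n trans k v)) len m.
Proof.
elim: v => [|v IH]; first by rewrite /sent /= !big_nil.
have e : sent n trans k v.+1 = (sent n trans k v + (trans v && (v %% n == k)%N))%N.
  by rewrite /sent -addn1 iotaD count_cat /= addn0.
rewrite e -[v.+1]addn1 iotaD big_cat /= IH big_cons big_nil.
case: (trans v && (v %% n == k)%N) => /=; last by rewrite addn0 addr0.
by rewrite addr0 -addn1 iotaD big_cat /= big_cons big_nil addr0.
Qed.

Theorem mainTheorem3 (R : realFieldType) (n : nat) (w : 'I_n -> nat)
  (lmin lmax : 'I_n -> R) (arr : 'I_n -> nat -> option R)
  (len : 'I_n -> nat -> R) (tau fin : nat -> R) (trans : nat -> bool)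
  (i j : 'I_n) (s t : R) :
  (forall k, (0 < w k)%N) ->
  arrivals_ok lmin lmax arr len ->
  iwrr_exec w arr tau fin trans ->
  j != i ->
  s <= t ->
  backlogged (Arr arr len i) (Dep len trans fin i) s t ->
  (Dep len trans fin i t - Dep len trans fin i s) / ((w i)%:R * lmin i)
  >= pos_part (Dep len trans fin j t - Dep len trans fin j s
               - (pos_part ((w j)%:R - (w i)%:R) + 1) * lmax j)
     / (((w j + w i)%N)%:R * lmax j).
Proof.
move=> wpos [hl hlen harr0 hfifo hfin] [tau0 hstep htau hvis] ji st hback.
have n0 : (0 < n)%N := leq_ltn_trans (leq0n _) (ltn_ord i).
set W := wmax w.
have hW : forall k, (w k <= W)%N by move=> k; rewrite /W /wmax; exact: leq_bigmax.
have W0 : (0 < W)%N := leq_trans (wpos i) (hW i).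
have tstep : forall u, tau u <= tau u.+1.
  move=> u; have := hstep u; case: (trans u) => [[h1 h2]|//]; exact: le_trans (ltW h1) h2.
have tmono : forall u d, tau u <= tau (u + d)%N.
  move=> u; elim=> [|d IH]; first by rewrite addn0.
  by rewrite addnS; apply: le_trans IH (tstep _).
have tmono' : forall u v, (u <= v)%N -> tau u <= tau v.
  by move=> u v /subnKC <-; apply: tmono.
have tfin : forall u, trans u -> tau u < fin u.
  by move=> u hu; have := hstep u; rewrite hu => -[].
have finle : forall u v, trans u -> (u < v)%N -> fin u <= tau v.
  move=> u v hu uv; have := hstep u; rewrite hu => -[_ h]; exact: le_trans h (tmono' _ _ uv).
have cut : forall T, exists N, forall u, (N <= u)%N -> trans u -> T <= fin u.
  move=> T; have [v hv] := htau T; exists v => u vu hu.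
  exact: le_trans hv (le_trans (tmono' _ _ vu) (ltW (tfin _ hu))).
have DepE : forall (k : 'I_n) T N, (forall u, (N <= u)%N -> trans u -> T <= fin u) ->
   Dep len trans fin k T = \sum_(u <- iota 0 N | [&& trans u, (u %% n == k)%N & fin u < T]) len k (sent n trans k u).
  move=> k T N hN; rewrite /Dep (@cumsumE _ _ _ N).
    rewrite -(big_mkord (fun u => [&& trans u, (u %% n == k)%N & fin u < T]) (fun u => len k (sent n trans k u))).
    by rewrite /index_iota subn0.
  move=> m hm.
  apply/negP => /and3P[h1 _ h2]; have := hN m hm h1; by rewrite leNgt h2.
pose Pd (k : 'I_n) u := [&& trans u, (u %% n == k)%N, s <= fin u & fin u < t].
have [N hN] := cut t.
have hNs : forall u, (N <= u)%N -> trans u -> s <= fin u.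
  by move=> u h1 h2; exact: le_trans st (hN u h1 h2).
have Ddiff : forall k : 'I_n, Dep len trans fin k t - Dep len trans fin k s
     = \sum_(u <- iota 0 N | Pd k u) len k (sent n trans k u).
  move=> k; rewrite (DepE k t N hN) (DepE k s N hNs).
  rewrite (bigID (fun u => s <= fin u)) /=.
  have -> : \sum_(u <- iota 0 N | [&& trans u, (u %% n == k)%N & fin u < t] && ~~ (s <= fin u)) len k (sent n trans k u) = \sum_(u <- iota 0 N | [&& trans u, (u %% n == k)%N & fin u < s]) len k (sent n trans k u).
    apply: eq_bigl => u; rewrite -ltNge.
    case: (trans u) => //=; case: (u %% n == k)%N => //=.
    case h: (fin u < s); rewrite ?andbT ?andbF //; exact: lt_le_trans h st.
  rewrite addrK; apply: eq_bigl => u; rewrite /Pd.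
  by case: (trans u) (u %% n == k)%N (s <= fin u) (fin u < t) => [] [] [] [].
have fifo : forall (k : 'I_n) m d a', arr k (m + d)%N = Some a' -> exists2 a, arr k m = Some a & a <= a'.
  move=> k m; elim=> [|d IH] a'; first by rewrite addn0 => h; exists a'.
  rewrite addnS => h; have [a'' h1 h2] := hfifo k _ _ h.
  have [a h3 h4] := IH _ h1; exists a => //; exact: le_trans h4 h2.
have lenpos : forall k m, 0 <= len k m.
  move=> k m; have [h1 _] := hl k; have /andP[h3 _] := hlen k m; exact: le_trans (ltW h1) h3.
have BL : forall v, (v %% n)%N = i -> ((v %/ n) %% W < w i)%N -> s <= tau v -> tau v < t -> trans v.
  move=> v hv el sv vt; rewrite (hvis v i hv) el /=.
  set S := sent n trans i v.
  apply/negPn/negP => nar.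
  pose ta := if arr i S is Some a then Num.min a t else t.
  have ht1 : tau v < ta.
    rewrite /ta; move: nar; rewrite /arrived_le.
    case: (arr i S) => [a|] nar /=; [by rewrite lt_min vt andbT ltNge | exact: vt].
  have ht2 : ta <= t by rewrite /ta; case: (arr i S) => [a|] //; rewrite ge_min lexx orbT.
  have hB := hback ta.
  have {hB} hB : Dep len trans fin i ta < Arr arr len i ta.
    by apply: hB; rewrite (le_lt_trans sv ht1) ht2.
  have [N0 hN0] := hfin i ta.
  have hA : Arr arr len i ta <= \sum_(m <- iota 0 S) len i m.
    rewrite /Arr (@cumsumE _ _ _ (maxn N0 S)); last first.
      by move=> m hm; apply: hN0; exact: leq_trans (leq_maxl _ _) hm.
    have -> : \sum_(m <- iota 0 S) len i m = \sum_(m < S) len i m.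
      by rewrite -(big_mkord xpredT (fun m => len i m)) /index_iota subn0.
    rewrite (big_ord_widen _ (fun m => len i m) (leq_maxr N0 S)).
    rewrite big_mkcond [X in _ <= X]big_mkcond; apply: ler_sum => m _.
    case ha: (arrived_lt (arr i m) ta); last by case: ifP => _ //; exact: lenpos.
    have -> : (m < S)%N; last done.
    rewrite ltnNge; apply/negP => Sm.
    move: ha; rewrite /arrived_lt; case ham: (arr i m) => [a'|] // ha.
    have [a haS hle] : exists2 a, arr i S = Some a & a <= a'.
      by apply: (fifo i S (m - S)%N); rewrite subnKC.
    have hta : ta <= a by rewrite /ta haS ge_min lexx.
    have := lt_le_trans ha (le_trans hta hle); by rewrite ltxx.
  have [N2 hN2] := cut ta.
  have hD : \sum_(m <- iota 0 S) len i m <= Dep len trans fin i ta.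
    set M := maxn N2 v.
    rewrite (DepE i ta M); last by move=> u hu; apply: hN2; exact: leq_trans (leq_maxl _ _) hu.
    have e : iota 0 M = iota 0 v ++ iota v (M - v) by rewrite -iotaD subnKC // leq_maxr.
    rewrite e big_cat /= -(@sum_sent _ (len i) trans n i v).
    apply: le_trans (_ : _ <= \sum_(u <- iota 0 v | [&& trans u, (u %% n == i)%N & fin u < ta]) len i (sent n trans i u)) _; last first.
      by rewrite lerDl sumr_ge0 // => u _; exact: lenpos.
    rewrite big_seq_cond [X in _ <= X]big_seq_cond big_mkcond [X in _ <= X]big_mkcond /=; apply: ler_sum => u _.
    case hP: ((u \in iota 0 v) && (trans u && (u %% n == i)%N)).
      move/andP: hP => [uv /andP[tu ju]].
      have uv' : (u < v)%N by move: uv; rewrite mem_iota.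
      by rewrite uv tu ju /= (le_lt_trans (finle u v tu uv') ht1).
    by case: ifP => _ //; exact: lenpos.
  have := le_lt_trans (le_trans hA hD) hB; by rewrite ltxx.
rewrite (Ddiff i) (Ddiff j).
set Di := \sum_(u <- iota 0 N | Pd i u) _.
set Dj := \sum_(u <- iota 0 N | Pd j u) _.
set Ki := count (Pd i) (iota 0 N).
set Kj := count (Pd j) (iota 0 N).
have hDi : Ki%:R * lmin i <= Di.
  by apply: sum_ge_count => u _; case/andP: (hlen i (sent n trans i u)).
have hDj : Dj <= Kj%:R * lmax j.
  by apply: sum_le_count => u _; case/andP: (hlen j (sent n trans j u)).
have comb : ((w j - w i).+1 < Kj)%N -> (w i * (Kj - (w j - w i).+1) <= (w i + w j) * Ki)%N.
  move=> cK.
  have Pj_ex : exists u, (u < N)%N && Pd j u.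
    have : (0 < Kj)%N := leq_ltn_trans (leq0n _) cK.
    rewrite /Kj -has_count => /hasP[u]; rewrite mem_iota add0n => /andP[_ uN] pu.
    by exists u; rewrite uN.
  have ub : forall u, (u < N)%N && Pd j u -> (u <= N)%N by move=> u /andP[/ltnW].
  case: (ex_minnP Pj_ex) => a /andP[aN pa] amin.
  case: (ex_maxnP Pj_ex ub) => b /andP[bN pb] bmax.
  have ab : (a <= b)%N by apply: amin; rewrite bN.
  move: (pa) (pb) => /and4P[ta' ja sa at'] /and4P[tb jb sb bt].
  have ja' : (a %% n)%N = j by apply/eqP.
  have jb' : (b %% n)%N = j by apply/eqP.
  set qa := (a %/ n)%N. set qb := (b %/ n)%N.
  have ea : a = (qa * n + j)%N by rewrite {1}(divn_eq a n) ja'.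
  have eb : b = (qb * n + j)%N by rewrite {1}(divn_eq b n) jb'.
  have eligj : forall u, (u %% n)%N = j -> trans u -> ((u %/ n) %% W < w j)%N.
    by move=> u hu; rewrite (hvis u j hu) => /andP[].
  have qab : (qa <= qb)%N by apply: leq_div2r.
  have hKj : (Kj <= count (pW W 0 (w j)) (iota qa (qb - qa).+1))%N.
    rewrite /Kj -size_filter.
    apply: (@leq_trans (size (map (fun g => g * n + j)%N [seq g <- iota qa (qb - qa).+1 | pW W 0 (w j) g]))); last by rewrite size_map size_filter.
    apply: uniq_leq_size; first by rewrite filter_uniq // iota_uniq.
    move=> u; rewrite mem_filter mem_iota add0n => /andP[pu /andP[_ uN]].
    move: (pu) => /and4P[tu ju _ _].
    have ju' : (u %% n)%N = j by apply/eqP.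
    have au : (a <= u)%N by apply: amin; rewrite uN.
    have ub' : (u <= b)%N by apply: bmax; rewrite uN.
    apply/mapP; exists (u %/ n)%N; last by rewrite {1}(divn_eq u n) ju'.
    rewrite mem_filter mem_iota; apply/andP; split.
      by rewrite /pW leq0n (eligj u ju' tu).
    exact: mid_aux qab (leq_div2r n au) (leq_div2r n ub').
  pose x := if (i < j)%N then qa.+1 else qa.
  pose L := (qb - qa)%N.
  have ij : (i : nat) != j by rewrite eq_sym; exact: ji.
  have ilt : (i < n)%N := ltn_ord i.
  have jlt : (j < n)%N := ltn_ord j.
  have hKi : (count (pW W 0 (w i)) (iota x L) <= Ki)%N.
    apply: (@leq_trans (size (map (fun g => g * n + i)%N [seq g <- iota x L | pW W 0 (w i) g]))).
      by rewrite size_map size_filter.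
    rewrite /Ki -size_filter; apply: uniq_leq_size.
      rewrite map_inj_uniq ?filter_uniq ?iota_uniq // => g g' /eqP.
      by rewrite eqn_add2r eqn_pmul2r // => /eqP.
    move=> v /mapP[g]; rewrite mem_filter mem_iota => /andP[eg /andP[g1 g2]] ->.
    have vmod : ((g * n + i) %% n)%N = i by rewrite modnMDl modn_small.
    have vdiv : ((g * n + i) %/ n)%N = g by rewrite divnMDl // divn_small // addn0.
    have [av vb] : (a < g * n + i)%N /\ (g * n + i < b)%N.
      rewrite ea eb; apply/andP; apply: pos_bounds => //.
      by rewrite g1 g2.
    have sv : s <= tau (g * n + i)%N := le_trans sa (finle a _ ta' av).
    have bt' : tau b < t := lt_trans (tfin b tb) bt.
    have vt : tau (g * n + i)%N < t := le_lt_trans (tmono' _ b (ltnW vb)) bt'.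
    have tv : trans (g * n + i)%N.
      apply: BL vmod _ sv vt; rewrite vdiv; by move: eg; rewrite /pW leq0n.
    rewrite mem_filter mem_iota add0n (ltn_trans vb bN) andbT /Pd tv vmod eqxx /=.
    rewrite (le_trans sv (ltW (tfin _ tv))) /=.
    by rewrite (le_lt_trans (finle _ b tv vb) bt') leq0n.
  have hj1 : count (pW W 0 (w j)) (iota qa L.+1) = (count (pW W 0 (w j)) (iota x L)).+1.
    rewrite /x; case: ltnP => _.
      by rewrite /= /pW leq0n (eligj a ja' ta') add1n.
    have e : iota qa L.+1 = iota qa L ++ [:: qb] by rewrite -addn1 iotaD /L subnKC.
    by rewrite e count_cat /= /pW leq0n (eligj b jb' tb) addn1.
  have hwin := window W (w i) (w j) x L W0 (hW i) (hW j).
  move: hKj; rewrite -/L hj1 => hKj.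
  apply: leq_trans (leq_mul (leqnn (w i)) (@sub_aux _ _ (w j - w i) hKj)) _.
  exact: leq_trans hwin (leq_mul (leqnn _) hKi).
clearbody Di Dj Ki Kj.
have pp : pos_part ((w j)%:R - (w i)%:R : R) = (w j - w i)%N%:R.
  rewrite /pos_part; case: (leqP (w i) (w j)) => h.
    by rewrite natrB // max_l // subr_ge0 ler_nat.
  have -> : (w j - w i = 0)%N by apply/eqP; rewrite subn_eq0 ltnW.
  by rewrite max_r // subr_le0 ler_nat ltnW.
rewrite pp natr1.
set c := (w j - w i).+1.
set X := Dj - c%:R * lmax j.
have [li lij] := hl i.
have [lj0 ljj] := hl j.
have lj : 0 < lmax j := lt_le_trans lj0 ljj.
have A0 : 0 < (w j + w i)%N%:R * lmax j by rewrite mulr_gt0 // ltr0n addn_gt0 wpos.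
have B0 : 0 < (w i)%:R * lmin i by rewrite mulr_gt0 // ltr0n wpos.
have Di0 : 0 <= Di by apply: le_trans hDi; rewrite mulr_ge0 // ltW.
rewrite /pos_part; have [hX|hX] := leP X 0.
  by rewrite mul0r divr_ge0 // ltW.

have cK : (c < Kj)%N.
  have hh : c%:R * lmax j < Dj by move: hX; rewrite /X subr_gt0.
  have hh2 := lt_le_trans hh hDj. by move: hh2; rewrite (ltr_pM2r lj) ltr_nat.
have cK' : (c <= Kj)%N := ltnW cK.
have := comb cK; rewrite -(ler_nat R) natrM (natrB _ cK') natrD => hc.
rewrite ler_pdivlMr // mulrAC ler_pdivrMr //.

have h1 : X <= (Kj%:R - c%:R) * lmax j by rewrite /X mulrBl lerD2r.
apply: (le_trans (ler_wpM2r (ltW B0) h1)).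
have e1 : (Kj%:R - c%:R) * lmax j * ((w i)%:R * lmin i) = ((w i)%:R * (Kj%:R - c%:R)) * (lmax j * lmin i) by ring.
rewrite e1.
apply: (le_trans (ler_wpM2r _ hc)); first by rewrite mulr_ge0 // ltW.
have e2 : ((w i)%:R + (w j)%:R) * Ki%:R * (lmax j * lmin i) = (Ki%:R * lmin i) * (((w j)%:R + (w i)%:R) * lmax j) by ring.
rewrite natrM natrD e2; apply: ler_wpM2r => //.
by rewrite -natrD ltW.
by rewrite -natrD.
Qed.
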